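(* Let $u\in A^*$, $R\subseteq[0,|u|]$, $p=(u,R)$ and $p^*=(u,[0,|u|]\setminus R)$. Then for every word $w\in A^*$, $$\binom{w}{p}=\sum_{v\in A^*}(-1)^{|v|-|u|}\binom{v}{p^*}\binom{w}{v}$$ (the sum has finitely many nonzero terms).
   Context: $A$ is a finite alphabet, $A^*$ the set of finite words over $A$, $|w|$ the length, $[0,k]=\{0,1,\dots,k\}$. For words $u=a_1\cdots a_k$, $v=b_1\cdots b_n$, $\binom{v}{u}$ is the number of order-preserving injections $\varphi:[k]\to[n]$ with $a_i=b_{\varphi(i)}$ for all $i$. For $R\subseteq[0,k]$, an occurrence of $p=(u,R)$ in $v$ is such an injection satisfying additionally $\varphi(i+1)=\varphi(i)+1$ for all $i\in R$, with conventions $\varphi(0)=0$ and $\varphi(k+1)=n+1$; $\binom{v}{p}=\binom{v}{u,R}$ is the number of occurrences of $p$ in $v$. (So $R=\emptyset$ gives $\binom{v}{u}$, $R=[1,k-1]$ counts factor occurrences, $R=[0,k]$ gives $[u=v]$.) *)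

(* Defs.v *)
From HB Require Import structures.
From mathcomp Require Import all_boot all_order all_algebra.
Unset Printing Implicit Defensive.
Import Order.TTheory GRing.Theory Num.Theory.

Section Occ.
Variable A : finType.

(* Words are [seq A]; positions of a word of length n are 'I_n (0-based),
   corresponding to the paper's 1-based positions 1..n via i |-> i+1. *)

(* The extended map on [0, k+1] of the paper (1-based), with
   phi(0) = 0 and phi(k+1) = n+1. *)
Definition ext_map (k n : nat) (f : {ffun 'I_k -> 'I_n}) (i : nat) : nat :=
  if i == 0 then 0
  else if i <= k then nth 0 [seq (nat_of_ord (f j)).+1 | j <- enum 'I_k] i.-1
  else n.+1.

Definition is_embedding (u v : seq A) (f : {ffun 'I_(size u) -> 'I_(size v)}) : bool :=
  [forall i : 'I_(size u), forall j : 'I_(size u), (i < j)%N ==> (f i < f j)%N] &&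
  [forall i : 'I_(size u), nth None (map Some u) i == nth None (map Some v) (f i)].

Definition binomw (v u : seq A) : nat :=
  #|[set f : {ffun 'I_(size u) -> 'I_(size v)} | is_embedding u v f]|.

Definition is_occ (u v : seq A) (R : {set 'I_(size u).+1})
    (f : {ffun 'I_(size u) -> 'I_(size v)}) : bool :=
  is_embedding u v f &&
  [forall i : 'I_(size u).+1,
     (i \in R) ==> (ext_map (size u) (size v) f (i.+1) == (ext_map (size u) (size v) f i).+1)].

Definition binomp (v u : seq A) (R : {set 'I_(size u).+1}) : nat :=
  #|[set f : {ffun 'I_(size u) -> 'I_(size v)} | is_occ u v R f]|.

End Occ.

Arguments ext_map : clear implicits.
Arguments is_embedding {A} u v f.
Arguments binomw {A} v u.
Arguments is_occ {A} u v R f.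
Arguments binomp {A} v u R.

(* Main.v *)
Require Import Defs.
From HB Require Import structures.
From mathcomp Require Import all_boot all_order all_algebra.
From mathcomp Require Import zify ring.
Import Order.TTheory GRing.Theory Num.Theory.

Set Implicit Arguments. Unset Strict Implicit.
Section S.
Variable A : finType.

Lemma extE k n (f : {ffun 'I_k -> 'I_n}) (j : 'I_k) :
  ext_map k n f j.+1 = (f j).+1.
Proof.
rewrite /ext_map /= ltn_ord (nth_map j); last by rewrite size_enum_ord.
by rewrite nth_ord_enum.
Qed.

Lemma extE2 k n (f : {ffun 'I_k -> 'I_n}) (i : nat) :
  (k <= i)%N -> ext_map k n f i.+1 = n.+1.
Proof. by move=> H; rewrite /ext_map /= ltnNge H. Qed.

Lemma ext0 k n (f : {ffun 'I_k -> 'I_n}) : ext_map k n f 0 = 0.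
Proof. by []. Qed.

Lemma ext_gt0 k n (f : {ffun 'I_k -> 'I_n}) i : (0 < i)%N -> (0 < ext_map k n f i)%N.
Proof.
case: i => // i _; case: (ltnP i k) => Hi.
  by rewrite (extE f (Ordinal Hi)).
by rewrite extE2.
Qed.

Definition map1 k n (f : {ffun 'I_k -> 'I_n}) : {ffun 'I_k -> 'I_n.+1} :=
  [ffun i => lift ord0 (f i)].

Definition map2 k n (f : {ffun 'I_k -> 'I_n}) : {ffun 'I_k.+1 -> 'I_n.+1} :=
  [ffun i => if unlift ord0 i is Some j then lift ord0 (f j) else ord0].

Lemma map2_0 k n (f : {ffun 'I_k -> 'I_n}) : map2 f ord0 = ord0.
Proof. by rewrite ffunE unlift_none. Qed.

Lemma map2_lift k n (f : {ffun 'I_k -> 'I_n}) j : map2 f (lift ord0 j) = lift ord0 (f j).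
Proof. by rewrite ffunE liftK. Qed.

Lemma ext_map1 k n (f : {ffun 'I_k -> 'I_n}) i :
  ext_map k n.+1 (map1 f) i = if i == 0 then 0 else (ext_map k n f i).+1.
Proof.
case: i => // i /=; case: (ltnP i k) => Hi.
  by rewrite (extE _ (Ordinal Hi)) (extE f (Ordinal Hi)) ffunE lift0.
by rewrite !extE2.
Qed.

Lemma ext_map2 k n (f : {ffun 'I_k -> 'I_n}) i :
  ext_map k.+1 n.+1 (map2 f) i = if i == 0 then 0 else (ext_map k n f i.-1).+1.
Proof.
case: i => // [[|i]] /=.
  by rewrite (extE _ ord0) map2_0.
case: (ltnP i k) => Hi.
  have -> : i.+2 = (lift ord0 (Ordinal Hi) : 'I_k.+1).+1 by rewrite lift0.
  by rewrite extE map2_lift lift0 (extE f (Ordinal Hi)).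
by rewrite !extE2.
Qed.

Lemma occP (u v : seq A) (R : {set 'I_(size u).+1}) (f : {ffun 'I_(size u) -> 'I_(size v)}) :
  reflect [/\ (forall i j : 'I_(size u), (i < j)%N -> (f i < f j)%N),
              (forall i : 'I_(size u), nth None (map Some u) i = nth None (map Some v) (f i)) &
              (forall i : 'I_(size u).+1, i \in R ->
                 ext_map (size u) (size v) f i.+1 = (ext_map (size u) (size v) f i).+1)]
          (is_occ u v R f).
Proof.
apply: (iffP idP).
  case/andP=> /andP [/forallP H1 /forallP H2] /forallP H3; split.
  - by move=> i j Hij; move/forallP: (H1 i) => /(_ j); rewrite Hij.
  - by move=> i; apply/eqP.
  - by move=> i Hi; apply/eqP; move: (H3 i); rewrite Hi.
case=> H1 H2 H3; apply/andP; split; first (apply/andP; split).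
- by apply/forallP => i; apply/forallP => j; apply/implyP; apply: H1.
- by apply/forallP => i; apply/eqP.
- by apply/forallP => i; apply/implyP => Hi; apply/eqP; apply: H3.
Qed.


Lemma occ_map1 (a : A) (u w : seq A) (R : {set 'I_(size u).+1})
  (f : {ffun 'I_(size u) -> 'I_(size w)}) :
  is_occ u (a :: w) R (map1 f) = (ord0 \notin R) && is_occ u w R f.
Proof.
apply/occP/andP.
  case=> H1 H2 H3.
  have H0 : ord0 \notin R.
    apply/negP => /H3; rewrite /= ext_map1 /= ext0.
    by move: (ext_gt0 f (ltn0Sn 0)); case: (ext_map _ _ f 1).
  split => //; apply/occP; split.
  - by move=> i j /H1; rewrite !ffunE !lift0.
  - by move=> i; rewrite H2 ffunE lift0.
  - move=> i Hi; have Hi0 : (i == 0 :> nat) = false.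
      apply/negP => /eqP Hi0; have Hio : i = ord0 by apply/val_inj.
      by move: H0; rewrite -Hio Hi.
    by move: (H3 i Hi); rewrite !ext_map1 Hi0 /= -/(size w) => /eqP; rewrite eqSS => /eqP.
case=> H0 /occP [H1 H2 H3]; split.
- by move=> i j /H1; rewrite !ffunE !lift0.
- by move=> i; rewrite H2 ffunE lift0.
- move=> i Hi; have Hi0 : (i == 0 :> nat) = false.
    apply/negP => /eqP Hi0; have Hio : i = ord0 by apply/val_inj.
    by move: H0; rewrite -Hio Hi.
  by rewrite !ext_map1 Hi0 /= -/(size w) (H3 i Hi).
Qed.

Definition shiftR (u : seq A) (R : {set 'I_(size u).+2}) : {set 'I_(size u).+1} :=
  [set i | lift ord0 i \in R].

Lemma occ_map2 (a b : A) (u w : seq A) (R : {set 'I_(size u).+2})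
  (f : {ffun 'I_(size u) -> 'I_(size w)}) :
  is_occ (b :: u) (a :: w) R (map2 f) = (b == a) && is_occ u w (shiftR R) f.
Proof.
apply/occP/andP.
  case=> H1 H2 H3; split.
    by move: (H2 ord0); rewrite map2_0 /= => -[->].
  apply/occP; split.
  - move=> i j Hij; have := H1 (lift ord0 i) (lift ord0 j).
    by rewrite !map2_lift !lift0 !ltnS; apply.
  - by move=> i; move: (H2 (lift ord0 i)); rewrite map2_lift lift0.
  - move=> i; rewrite inE => /H3; rewrite !ext_map2 lift0 /= => H.
    by apply/eqP; rewrite -eqSS; apply/eqP.
move=> [/eqP Hba /occP [H1 H2 H3]]; subst b; split.
- move=> i j; case: (unliftP ord0 i) => [i'|] ->; case: (unliftP ord0 j) => [j'|] ->;
    rewrite ?map2_lift ?map2_0 ?lift0 //= ltnS; apply: H1.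
- by move=> i; case: (unliftP ord0 i) => [i'|] ->; rewrite ?map2_lift ?map2_0 ?lift0 //= H2.
- move=> i; case: (unliftP ord0 i) => [i'|] ->.
    by move=> Hi; rewrite !ext_map2 lift0 /= H3 // inE.
  by move=> _; rewrite !ext_map2 /=.
Qed.

Lemma occ_nil (w : seq A) (R : {set 'I_1}) (f : {ffun 'I_0 -> 'I_(size w)}) :
  is_occ [::] w R f = (ord0 \notin R) || (size w == 0).
Proof.
apply/occP/idP.
  case=> _ _ H3; case: (boolP (ord0 \in R)) => H //=.
  by have := H3 ord0 H; rewrite /ext_map /= => -[->].
move=> H; split; try by case.
move=> i; rewrite (ord1 i) => Hi; move: H; rewrite Hi /= => /eqP Hw.
by rewrite /ext_map /= Hw.
Qed.

Lemma binomp_nil (w : seq A) (R : {set 'I_1}) :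
  binomp w [::] R = ((ord0 \notin R) || (size w == 0)).
Proof.
rewrite /binomp.
transitivity #|[set f : {ffun 'I_0 -> 'I_(size w)} | (ord0 \notin R) || (size w == 0)]|.
  by apply: eq_card => f; rewrite !inE occ_nil.
case: ((ord0 \notin R) || (size w == 0)).
  by rewrite (@eq_card _ _ predT) ?card_ffun ?card_ord // => x; rewrite inE.
by rewrite (@eq_card0 _ _) // => x; rewrite inE.
Qed.

Lemma binomp_nilw (b : A) (u : seq A) (R : {set 'I_(size u).+2}) :
  binomp [::] (b :: u) R = 0.
Proof.
apply/eqP; rewrite -leqn0; apply: leq_trans (max_card _) _.
by rewrite card_ffun !card_ord exp0n.
Qed.

Lemma map1_inj k n : injective (@map1 k n).
Proof.
move=> f g H; apply/ffunP => i.
by move/ffunP: H => /(_ i); rewrite !ffunE => /lift_inj.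
Qed.

Lemma map2_inj k n : injective (@map2 k n).
Proof.
move=> f g H; apply/ffunP => i.
by move/ffunP: H => /(_ (lift ord0 i)); rewrite !map2_lift => /lift_inj.
Qed.

Lemma binomp_cons (a b : A) (u w : seq A) (R : {set 'I_(size u).+2}) :
  binomp (a :: w) (b :: u) R =
  (ord0 \notin R) * binomp w (b :: u) R + (b == a) * binomp w u (shiftR R).
Proof.
rewrite /binomp.
set S := [set f : {ffun 'I_(size u).+1 -> 'I_(size w).+1} | is_occ (b :: u) (a :: w) R f].
set B := [set f : {ffun 'I_(size u).+1 -> 'I_(size w).+1} | f ord0 != ord0].
rewrite -(cardsID B S) addnC.
have -> : S :&: B = (@map1 _ _) @: [set f | (ord0 \notin R) && is_occ (b :: u) w R f].
  apply/setP => f; rewrite !inE; apply/idP/imsetP.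
    case/andP => Hocc Hf0.
    have Hocc' := Hocc; move/occP: Hocc' => [H1 _ _].
    have Hpos : forall i, (0 < f i)%N.
      move=> i; case: (unliftP ord0 i) => [i'|] ->; last by rewrite lt0n.
      apply: leq_trans (H1 ord0 (lift ord0 i') _); first by rewrite lt0n.
      by rewrite lift0.
    have H : forall i, (f i).-1 < size w.
      by move=> i; move: (Hpos i); case: (f i) => [[|x] Hx] //=.
    set g := [ffun i => Ordinal (H i)].
    have fE : f = map1 g.
      by apply/ffunP => i; rewrite !ffunE; apply: ord_inj; rewrite lift0 /= prednK.
    by exists g => //; rewrite inE -(@occ_map1 a (b :: u) w R g) -fE.
  case=> g; rewrite inE -(@occ_map1 a (b :: u) w R g) => Hg ->; rewrite Hg /= ffunE.
  by apply/eqP => /(congr1 (@nat_of_ord _)); rewrite lift0.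
rewrite card_imset; last exact: map1_inj.
have -> : S :\: B = (@map2 _ _) @: [set f | (b == a) && is_occ u w (shiftR R) f].
  apply/setP => f; rewrite !inE negbK; apply/idP/imsetP.
    case/andP => /eqP Hf0 Hocc.
    have Hocc' := Hocc; move/occP: Hocc' => [H1 _ _].
    have Hpos : forall i, (0 < f (lift ord0 i))%N.
      move=> i; have := H1 ord0 (lift ord0 i); rewrite Hf0 lift0; exact.
    have H : forall i, (f (lift ord0 i)).-1 < size w.
      by move=> i; move: (Hpos i); case: (f (lift ord0 i)) => [[|x] Hx] //=.
    set g := [ffun i => Ordinal (H i)].
    have fE : f = map2 g.
      apply/ffunP => i; case: (unliftP ord0 i) => [i'|] ->.
        by rewrite map2_lift ffunE; apply: ord_inj; rewrite lift0 /= prednK.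
      by rewrite map2_0.
    by exists g => //; rewrite inE -(@occ_map2 a b u w R g) -fE.
  case=> g; rewrite inE -(@occ_map2 a b u w R g) => Hg ->; rewrite Hg map2_0 eqxx.
  by [].
rewrite card_imset; last exact: map2_inj.
have cardA : forall (T : finType) (c : bool) (P : pred T),
    #|[set x | c && P x]| = c * #|[set x | P x]|.
  move=> T [] P; first by rewrite mul1n; apply: eq_card => x; rewrite !inE.
  by rewrite mul0n; apply: eq_card0 => x; rewrite !inE.
by rewrite (cardA _ (b == a) (is_occ u w (shiftR R))) (cardA _ (ord0 \notin R) (is_occ (b :: u) w R)) addnC.
Qed.

Lemma binomwE (w v : seq A) : binomw w v = binomp w v set0.
Proof.
rewrite /binomw /binomp; apply: eq_card => f; rewrite !inE /is_occ.
have -> : [forall i : 'I_(size v).+1, (i \in set0) ==> (ext_map (size v) (size w) f i.+1 == (ext_map (size v) (size w) f i).+1)] = true.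
  by apply/forallP => i; rewrite in_set0.
by rewrite andbT.
Qed.

Lemma binomw_nil (w : seq A) : binomw w [::] = 1.
Proof. by rewrite binomwE binomp_nil in_set0. Qed.

Lemma shiftR0 (u : seq A) : shiftR (set0 : {set 'I_(size u).+2}) = set0.
Proof. by apply/setP => i; rewrite !inE. Qed.

Lemma shiftRC (u : seq A) (R : {set 'I_(size u).+2}) : shiftR (~: R) = ~: shiftR R.
Proof. by apply/setP => i; rewrite !inE. Qed.

Definition Bcons (a : A) (w v : seq A) : nat :=
  if v is b :: v' then (b == a) * binomw w v' else 0.

Lemma binomw_consw (a : A) (w v : seq A) : binomw (a :: w) v = binomw w v + Bcons a w v.
Proof.
case: v => [|b v]; first by rewrite !binomw_nil.
rewrite /= !binomwE (@binomp_cons a b v w set0) in_set0 mul1n.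
by rewrite (shiftR0 v).
Qed.

Definition Pcons (a : A) (v u : seq A) : {set 'I_(size u).+1} -> nat :=
  match u as u0 return {set 'I_(size u0).+1} -> nat with
  | [::] => fun _ => 0
  | b :: u' => fun R => (b == a) * binomp v u' (shiftR R)
  end.
Arguments Pcons : clear implicits.

Lemma binomp_consw (a : A) (v u : seq A) (R : {set 'I_(size u).+1}) :
  binomp (a :: v) u R = (ord0 \notin R) * binomp v u R + Pcons a v u R.
Proof.
case: u R => [|b u] R.
  by rewrite !binomp_nil /= addn0; case: (ord0 \notin R).
exact: binomp_cons.
Qed.

Lemma binomw_gt (w v : seq A) : size w < size v -> binomw w v = 0.
Proof.
move=> Hlt; apply/eqP; rewrite cards_eq0; apply/eqP/setP => f; rewrite !inE.
apply/negP => /andP [/forallP H1 _].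
have inj : injective f.
  move=> i j Hij; apply/eqP; apply/negP => Hne.
  case: (ltngtP i j) => [Hl|Hl|/ord_inj Heq]; last by rewrite Heq eqxx in Hne.
    by move/forallP: (H1 i) => /(_ j); rewrite Hl Hij ltnn.
  by move/forallP: (H1 j) => /(_ i); rewrite Hl Hij ltnn.
by move: (leq_card f inj); rewrite !card_ord leqNgt Hlt.
Qed.

Local Open Scope ring_scope.

Definition cc (m k : nat) : int := (-1) ^ (m%:Z - k%:Z).

Lemma cc_S1 m k : cc m.+1 k = - cc m k.
Proof.
rewrite /cc.
have -> : (m.+1)%:Z - k%:Z = (m%:Z - k%:Z) + 1 by lia.
by rewrite exprzDr ?unitrN1 // expr1z mulrN1.
Qed.

Lemma cc_SS m k : cc m.+1 k.+1 = cc m k.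
Proof. by rewrite /cc; congr (_ ^ _); lia. Qed.

Definition term (m : nat) (w u : seq A) (R : {set 'I_(size u).+1}) : int :=
  \sum_(v : m.-tuple A) cc m (size u) * (binomp v u (~: R))%:Z * (binomw w v)%:Z.
Arguments term : clear implicits.

Definition G (N : nat) (w u : seq A) (R : {set 'I_(size u).+1}) : int :=
  \sum_(0 <= m < N.+1) term m w u R.
Arguments G : clear implicits.

Lemma sum_tuple0 (F : seq A -> int) : \sum_(v : 0.-tuple A) F v = F [::].
Proof. by rewrite (big_pred1 [tuple]) // => v; rewrite (tuple0 v); apply/esym/eqP. Qed.

Lemma sum_tupleS m (F : seq A -> int) :
  \sum_(v : m.+1.-tuple A) F v = \sum_(b : A) \sum_(v : m.-tuple A) F (b :: v).
Proof.
rewrite pair_big /=.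
rewrite (reindex (fun p : A * m.-tuple A => [tuple of p.1 :: val p.2])) //=.
exists (fun t : m.+1.-tuple A => (thead t, [tuple of behead t])).
  by move=> [b t] _; congr pair; apply: val_inj.
by move=> t _; apply: val_inj => /=; rewrite [in RHS](tuple_eta t).
Qed.

Lemma term_gt m w u R : (size w < m)%N -> term m w u R = 0.
Proof.
move=> H; apply: big1 => v _.
by rewrite binomw_gt ?mulr0 // size_tuple.
Qed.

Lemma G_widen N w u R : (size w <= N)%N -> G N w u R = G (size w) w u R.
Proof.
move=> H; rewrite /G (@big_cat_nat _ _ _ (size w).+1) //=.
rewrite [X in _ + X]big_nat_cond [X in _ + X]big1 ?addr0 // => m /andP [/andP [Hm _] _].
exact: term_gt.
Qed.

Lemma T3sum (a : A) (w : seq A)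
  (IH : forall u (R : {set 'I_(size u).+1}), (binomp w u R)%:Z = G (size w) w u R)
  (u : seq A) (R : {set 'I_(size u).+1}) :
  \sum_(0 <= m < (size w).+1) \sum_(v : m.-tuple A)
     cc m.+1 (size u) * (Pcons a v u (~: R))%:Z * (binomw w v)%:Z
  = (Pcons a w u R)%:Z.
Proof.
case: u R => [|b u] R /=.
  by rewrite big1 // => m _; rewrite big1 // => v _; rewrite mulr0 mul0r.
rewrite PoszM IH /G mulr_sumr; apply: eq_bigr => m _.
rewrite /term mulr_sumr; apply: eq_bigr => v _.
rewrite cc_SS PoszM (shiftRC R); ring.
Qed.

Lemma main_ind (w : seq A) :
  forall u (R : {set 'I_(size u).+1}), (binomp w u R)%:Z = G (size w) w u R.
Proof.
elim: w => [|a w IH] u R.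
  rewrite /G big_nat1 /term (sum_tuple0 (fun s => cc 0 (size u) * (binomp s u (~:R))%:Z * (binomw [::] s)%:Z)) binomw_nil mulr1.
  case: u R => [|b u] R.
    by rewrite !binomp_nil !orbT /cc subrr expr0z mul1r.
  by rewrite !binomp_nilw mulr0.
rewrite (@binomp_consw a w u R) /G /=.
set T2 := fun m => \sum_(v : m.-tuple A) cc m (size u) * (binomp v u (~:R))%:Z * (Bcons a w v)%:Z.
have E1 : forall m, term m (a :: w) u R = term m w u R + T2 m.
  move=> m; rewrite /term /T2 -big_split; apply: eq_bigr => v _ /=.
  by rewrite binomw_consw PoszD mulrDr.
rewrite (eq_bigr _ (fun m _ => E1 m)) big_split /=.
have -> : \sum_(0 <= m < (size w).+2) term m w u R = G (size w).+1 w u R by [].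
rewrite G_widen // -IH.
rewrite big_nat_recl //.
have -> : T2 0%N = 0 by rewrite /T2 (sum_tuple0 (fun s => cc 0 (size u) * (binomp s u (~:R))%:Z * (Bcons a w s)%:Z)) /= mulr0.
rewrite add0r.
set T3 := fun m => \sum_(v : m.-tuple A) cc m.+1 (size u) * (Pcons a v u (~: R))%:Z * (binomw w v)%:Z.
have E2 : forall m, T2 m.+1 = - ((nat_of_bool (ord0 \in R))%:Z * term m w u R) + T3 m.
  move=> m; rewrite /T2 (@sum_tupleS m (fun s => cc m.+1 (size u) * (binomp s u (~:R))%:Z * (Bcons a w s)%:Z)) (bigD1 a) //=.
  rewrite [X in _ + X = _]big1 ?addr0; last first.
    by move=> b /negPf Hb; apply: big1 => v _; rewrite /= Hb mul0n mulr0.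
  rewrite /term /T3 mulr_sumr -sumrN -big_split; apply: eq_bigr => v _ /=.
  rewrite eqxx mul1n (@binomp_consw a v u (~: R)) in_setC negbK PoszD PoszM cc_S1.
  ring.
rewrite (eq_bigr _ (fun m _ => E2 m)) big_split /= sumrN -mulr_sumr.
have -> : \sum_(0 <= m < (size w).+1) term m w u R = G (size w) w u R by [].
rewrite -IH /T3 (@T3sum a w IH u R) PoszD PoszM.
by case: (ord0 \in R) => /=; ring.
Qed.

Theorem mainTheorem8' (u : seq A) (R : {set 'I_(size u).+1})
    (w : seq A) (N : nat) (hN : (size w <= N)%N) :
  ((binomp w u R)%:Z =
   \sum_(m < N.+1) \sum_(v : m.-tuple A)
      ((-1 : int) ^ (m%:Z - (size u)%:Z)) * (binomp (val v) u (~: R))%:Z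
        * (binomw w (val v))%:Z)%R.
Proof.
rewrite main_ind -(G_widen R hN) /G big_mkord.
by [].
Qed.
End S.

Unset Implicit Arguments.
Set Strict Implicit.
Local Open Scope ring_scope.

Theorem mainTheorem8 (A : finType) (u : seq A) (R : {set 'I_(size u).+1})
    (w : seq A) (N : nat) (hN : (size w <= N)%N) :
  ((binomp w u R)%:Z =
   \sum_(m < N.+1) \sum_(v : m.-tuple A)
      ((-1 : int) ^ (m%:Z - (size u)%:Z)) * (binomp (val v) u (~: R))%:Z
        * (binomw w (val v))%:Z)%R.
Proof. exact: (@mainTheorem8' A u R w N hN). Qed.
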